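(* Let $A$ and $B$ be real symmetric $n\times n$ matrices. Let $\lambda_1$ be the eigenvalue of $A$ of largest absolute value, assumed to have multiplicity one, and let $\lambda_2$ be an eigenvalue of $A$ of second-largest absolute value. Let $\mu_1$ be an eigenvalue of $B$ of largest absolute value (so $\|A\|=|\lambda_1|$, $\|B\|=|\mu_1|$). Suppose $\kappa\in[0,1)$ satisfies $|\lambda_2|\le \kappa|\lambda_1|$, let $\eta=\|A-B\|$, and assume $|\mu_1|-\eta\ge \kappa|\lambda_1|$. Let $v(A)$ and $v(B)$ be unit eigenvectors of $A$ and $B$ associated with $\lambda_1$ and $\mu_1$ respectively, with signs chosen so that $v(A)\cdot v(B)\ge 0$. Then $$\|v(A)-v(B)\|^2\le 2\left(1-\frac{1}{|\lambda_1|}\sqrt{\frac{(|\mu_1|-\eta)^2-\lambda_1^2\kappa^2}{1-\kappa^2}}\right).$$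
   Context: $\|\cdot\|$ denotes the Euclidean norm on vectors and the associated spectral norm on matrices. *)

(* Defs.v *)
From HB Require Import structures.
From mathcomp Require Import all_boot all_order all_algebra.
From mathcomp Require Import classical_sets reals.
Set Implicit Arguments. Unset Strict Implicit. Unset Printing Implicit Defensive.
Import Order.TTheory GRing.Theory Num.Theory.
Local Open Scope ring_scope.
Local Open Scope classical_set_scope.

(* Vectors of R^n are represented as row vectors 'rV[R]_n, matching the
   row-vector convention of mathcomp's mxalgebra (eigenvalue/eigenspace). *)

Definition vdot (R : realType) (n : nat) (u v : 'rV[R]_n) : R := (u *m v^T) 0 0.
Definition vnorm (R : realType) (n : nat) (u : 'rV[R]_n) : R := Num.sqrt (vdot u u).

Definition spec_norm (R : realType) (n : nat) (M : 'M[R]_n) : R :=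
  sup [set vnorm (x *m M) | x in [set x : 'rV[R]_n | vnorm x = 1]].

(* Main.v *)
Require Import Defs.
From HB Require Import structures.
From mathcomp Require Import all_boot all_order all_algebra.
From mathcomp Require Import classical_sets reals.
From mathcomp Require Import complex spectral sesquilinear.
From mathcomp Require Import ring lra.
Import Order.TTheory GRing.Theory Num.Theory.
Local Open Scope ring_scope.
Local Open Scope sesquilinear_scope.

Section Key.
Variable R : realType.
Local Notation C := (R[i]).
Local Notation fc := (real_complex R).

Lemma vdotE n (u v : 'rV[R]_n) : vdot u v = \sum_k u 0 k * v 0 k.
Proof. by rewrite /vdot mxE; apply: eq_bigr => k _; rewrite mxE. Qed.

Lemma dotc_map n (u v : 'rV[R]_n) :
  ((map_mx fc u) *m (map_mx fc v)^t* ) 0 0 = fc (vdot u v).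
Proof.
rewrite vdotE rmorph_sum mxE; apply: eq_bigr => k _.
rewrite !mxE rmorphM; congr (_ * _); exact: conjc_real.
Qed.

Lemma unit_dot n (P : 'M[C]_n) (y : 'rV[C]_n) : P *m P^t* = 1%:M ->
  (y *m P) *m (y *m P)^t* = y *m y^t*.
Proof.
move=> PP; rewrite trmx_mul map_mxM mulmxA -[y *m P *m _]mulmxA PP mulmx1.
by [].
Qed.

Lemma key n (A : 'M[R]_n) (l1 l2 : R) (v w : 'rV[R]_n) :
  A^T = A -> \rank (eigenspace A l1) = 1%N -> v != 0 -> v *m A = l1 *: v ->
  (forall l, eigenvalue A l -> l != l1 -> `|l| <= `|l2|) ->
  vdot w v = 0 ->
  vdot (w *m A) (w *m A) <= l2 ^+ 2 * vdot w w.
Proof.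
move=> hA rk vn0 hv hl wv.
pose Ac := map_mx fc A.
have herm : Ac \is hermsymmx.
  apply/is_hermitianmxP; rewrite expr0 scale1r; apply/matrixP => i j.
  rewrite !mxE -[in LHS]hA mxE; symmetry; exact: conjc_real.
have /orthomx_spectralP HAc := hermitian_normalmx herm.
set P := spectralmx Ac in HAc; set d := spectral_diag Ac in HAc.
have Pu : P \is unitarymx by apply: spectral_unitarymx.
have PP : P *m P^t* = 1%:M by apply/unitarymxP.
have PtP : P^t* *m P = 1%:M by rewrite -invmx_unitary // mulVmx // spectral_unit.
have dreal : d \is a realmx by apply: hermitian_spectral_diag_real.
pose wc := map_mx fc w.
pose z := wc *m P^t*.
have wcE : wc = z *m P by rewrite /z -mulmxA PtP mulmx1.
have wAE : map_mx fc (w *m A) = (z *m diag_mx d) *m P.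
  by rewrite map_mxM -/wc -/Ac HAc invmx_unitary // !mulmxA.
have PAc : P *m Ac = diag_mx d *m P.
  by rewrite HAc invmx_unitary // !mulmxA PP mul1mx.
suff : fc (vdot (w *m A) (w *m A)) <= fc (l2 ^+ 2 * vdot w w) by rewrite lecR.
rewrite -dotc_map wAE (unit_dot _ _ (z *m diag_mx d) PP) rmorphM -[X in _ <= _ * X](dotc_map _ w w) -/wc wcE (unit_dot _ _ z PP).
rewrite !mxE mulr_sumr; apply: ler_sum => j _.
have zdE : (z *m diag_mx d) 0 j = z 0 j * d 0 j by rewrite mul_mx_diag mxE.
have ctE : forall (y : 'rV[C]_n), (y^t* ) j 0 = (y 0 j)^* by move=> y; rewrite !mxE.
rewrite !ctE zdE.
have zjE : forall (a : 'rV[C]_n), row j P = a -> z 0 j = \sum_k wc 0 k * (a 0 k)^*.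
  by move=> a <-; rewrite !mxE; apply: eq_bigr => k _; rewrite !mxE.
have [zj0|zjn0] := eqVneq (z 0 j) 0.
  by rewrite zj0 !(mul0r, mulr0, rmorph0).
have [r dr] : exists r, d 0 j = fc r.
  by apply/complex_realP; move/mxOverP: dreal; apply.
have rowne : row j P != 0.
  apply: contra zjn0 => /eqP /zjE ->; rewrite big1 // => k _.
  by rewrite !mxE conjC0 mulr0.
have evc : eigenvalue Ac (fc r).
  apply/eigenvalueP; exists (row j P) => //.
  by rewrite -row_mul PAc row_mul row_diag_mx -scalemxAl -rowE dr.
have evA : eigenvalue A r by rewrite -(eigenvalue_map fc).
have rl2 : `|r| <= `|l2|.
  have [rl1|rn1] := eqVneq r l1; last exact: hl.
  exfalso; move: zjn0; apply/negP; rewrite negbK.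
  pose vc := map_mx fc v.
  have vcsub : (vc <= map_mx fc (eigenspace A l1))%MS.
    by rewrite map_submx; apply/eigenspaceP.
  have rk1 : \rank (map_mx fc (eigenspace A l1)) = 1%N by rewrite mxrank_map.
  have rk2 : \rank vc = 1%N by rewrite rank_rV map_mx_eq0 vn0.
  have Esub : (map_mx fc (eigenspace A l1) <= vc)%MS.
    by have := (mxrank_leqif_sup vcsub).2; rewrite rk1 rk2 eqxx.
  have rsub : (row j P <= vc)%MS.
    apply: submx_trans Esub; rewrite map_eigenspace -rl1 -/Ac.
    by apply/eigenspaceP; rewrite -row_mul PAc row_mul row_diag_mx -scalemxAl -rowE dr.
  have [a ra] := sub_rVP rsub.
  rewrite (zjE _ ra) (eq_bigr (fun k => a^* * fc (w 0 k * v 0 k))).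
    by rewrite -mulr_sumr -rmorph_sum -vdotE wv rmorph0 mulr0.
  move=> k _; rewrite !mxE rmorphM mulrCA; congr (_ * _).
  rewrite rmorphM; congr (_ * _); exact: conjc_real.
rewrite dr.
have cE : (z 0 j * fc r)^* = (z 0 j)^* * fc r.
  by rewrite rmorphM; congr (_ * _); exact: conjc_real.
rewrite cE.
have -> : z 0 j * fc r * ((z 0 j)^* * fc r) = fc (r ^+ 2) * (z 0 j * (z 0 j)^*).
  by rewrite rmorphXn; ring.
apply: ler_wpM2r; first exact: mul_conjC_ge0.
rewrite lecR -[r ^+ 2]ger0_norm ?sqr_ge0 // -[l2 ^+ 2]ger0_norm ?sqr_ge0 //.
by rewrite !normrX ler_pXn2r // ?nnegrE ?normr_ge0.
Qed.

Lemma vdotC n (u v : 'rV[R]_n) : vdot u v = vdot v u.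
Proof. by rewrite !vdotE; apply: eq_bigr => k _; rewrite mulrC. Qed.

Lemma vdotDl n (u u' v : 'rV[R]_n) : vdot (u + u') v = vdot u v + vdot u' v.
Proof. by rewrite !vdotE -big_split; apply: eq_bigr => k _; rewrite mxE mulrDl. Qed.

Lemma vdotZl n a (u v : 'rV[R]_n) : vdot (a *: u) v = a * vdot u v.
Proof. by rewrite !vdotE mulr_sumr; apply: eq_bigr => k _; rewrite mxE mulrA. Qed.

Lemma vdotNl n (u v : 'rV[R]_n) : vdot (- u) v = - vdot u v.
Proof. by rewrite -scaleN1r vdotZl mulN1r. Qed.

Lemma vdotBl n (u u' v : 'rV[R]_n) : vdot (u - u') v = vdot u v - vdot u' v.
Proof. by rewrite vdotDl vdotNl. Qed.

Lemma vdotDr n (u v v' : 'rV[R]_n) : vdot u (v + v') = vdot u v + vdot u v'.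
Proof. by rewrite vdotC vdotDl !(vdotC _ u). Qed.

Lemma vdotZr n a (u v : 'rV[R]_n) : vdot u (a *: v) = a * vdot u v.
Proof. by rewrite vdotC vdotZl vdotC. Qed.

Lemma vdotBr n (u v v' : 'rV[R]_n) : vdot u (v - v') = vdot u v - vdot u v'.
Proof. by rewrite vdotC vdotBl !(vdotC _ u). Qed.

Lemma vdot_mul n (u v : 'rV[R]_n) M : vdot (u *m M) v = vdot u (v *m M^T).
Proof. by rewrite /vdot trmx_mul trmxK mulmxA. Qed.

Lemma vdot_ge0 n (u : 'rV[R]_n) : 0 <= vdot u u.
Proof. by rewrite vdotE sumr_ge0 // => k _; rewrite -expr2 sqr_ge0. Qed.

Lemma vnorm_sq n (u : 'rV[R]_n) : vnorm u ^+ 2 = vdot u u.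
Proof. by rewrite /vnorm sqr_sqrtr // vdot_ge0. Qed.

Lemma sq_le (a b : R) : `|a| <= b -> a ^+ 2 <= b ^+ 2.
Proof.
move=> h; have b0 : 0 <= b by apply: le_trans h.
by rewrite -[a ^+ 2]ger0_norm ?sqr_ge0 // normrX ler_pXn2r // ?nnegrE ?normr_ge0.
Qed.

Lemma vnorm_mul_bound n (M : 'M[R]_n) (x : 'rV[R]_n) : vnorm x = 1 ->
  vnorm (x *m M) <= Num.sqrt (\sum_j (\sum_i `|M i j|) ^+ 2).
Proof.
move=> hx; rewrite /vnorm ler_sqrt; last first.
  by rewrite sumr_ge0 // => j _; rewrite sqr_ge0.
have xx : vdot x x = 1 by rewrite -vnorm_sq hx expr1n.
have xi : forall i, `|x 0 i| <= 1.
  move=> i; have : x 0 i ^+ 2 <= 1.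
    rewrite -xx vdotE (bigD1 i) //= -expr2 lerDl sumr_ge0 // => k _.
    by rewrite -expr2 sqr_ge0.
  rewrite -[x 0 i ^+ 2]ger0_norm ?sqr_ge0 // normrX -[X in _ <= X](expr1n _ 2).
  by rewrite ler_pXn2r // ?nnegrE ?normr_ge0.
rewrite vdotE; apply: ler_sum => j _; rewrite -expr2; apply: sq_le.
rewrite mxE; apply: le_trans (ler_norm_sum _ _ _) _; apply: ler_sum => i _.
rewrite normrM; rewrite -[X in _ <= X]mul1r; apply: ler_wpM2r => //.
Qed.

Lemma spec_norm_ub n (M : 'M[R]_n) (x : 'rV[R]_n) : vnorm x = 1 ->
  vnorm (x *m M) <= spec_norm M.
Proof.
move=> hx; rewrite /spec_norm; apply: ub_le_sup; last by exists x.
exists (Num.sqrt (\sum_j (\sum_i `|M i j|) ^+ 2)) => y [x' hx' <-].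
exact: vnorm_mul_bound.
Qed.
End Key.

Theorem mainTheorem1 (R : realType) (n : nat) (A B : 'M[R]_n)
  (lambda1 lambda2 mu1 kappa : R) (vA vB : 'rV[R]_n) :
  A^T = A -> B^T = B ->
  eigenvalue A lambda1 ->
  (forall l, eigenvalue A l -> `|l| <= `|lambda1|) ->
  \rank (eigenspace A lambda1) = 1%N ->
  eigenvalue A lambda2 -> lambda2 != lambda1 ->
  (forall l, eigenvalue A l -> l != lambda1 -> `|l| <= `|lambda2|) ->
  eigenvalue B mu1 ->
  (forall l, eigenvalue B l -> `|l| <= `|mu1|) ->
  0 <= kappa -> kappa < 1 ->
  `|lambda2| <= kappa * `|lambda1| ->
  kappa * `|lambda1| <= `|mu1| - spec_norm (A - B) ->
  vnorm vA = 1 -> vA *m A = lambda1 *: vA ->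
  vnorm vB = 1 -> vB *m B = mu1 *: vB ->
  0 <= vdot vA vB ->
  vnorm (vA - vB) ^+ 2 <=
    2 * (1 - `|lambda1|^-1 *
      Num.sqrt (((`|mu1| - spec_norm (A - B)) ^+ 2 - lambda1 ^+ 2 * kappa ^+ 2)
                / (1 - kappa ^+ 2))).
Proof.
move=> hA hB ev1 max1 rk1 ev2 ne21 max2 evB maxB k0 k1 hk hm nA eA nB eB c0.
set eta := spec_norm (A - B) in hm *.
have vAA : vdot vA vA = 1 by rewrite -vnorm_sq nA expr1n.
have vBB : vdot vB vB = 1 by rewrite -vnorm_sq nB expr1n.
have vAn0 : vA != 0.
  apply/eqP => h; move: vAA; rewrite h vdotE big1 => [/eqP|k _].
    by rewrite eq_sym oner_eq0.
  by rewrite mxE mul0r.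
have l1n0 : lambda1 != 0.
  apply/eqP => h0; have := max1 _ ev2; rewrite h0 normr0 normr_le0 => /eqP h2.
  by move: ne21; rewrite h2 h0 eqxx.
set c := vdot vA vB in c0 *.
have cBA : vdot vB vA = c by rewrite vdotC.
set w := vB - c *: vA.
have wv : vdot w vA = 0 by rewrite vdotBl vdotZl vAA cBA mulr1 subrr.
have ww : vdot w w = 1 - c ^+ 2.
  rewrite /w !(vdotBl, vdotBr, vdotZl, vdotZr) vBB vAA cBA -/c; ring.
have Ab : vB *m A = (c * lambda1) *: vA + w *m A.
  have vBw : vB = w + c *: vA by rewrite /w subrK.
  by rewrite {1}vBw mulmxDl -scalemxAl eA scalerA addrC.
have key' := @key R n A lambda1 lambda2 vA w hA rk1 vAn0 eA max2 wv.
have cross : vdot vA (w *m A) = 0 by rewrite vdotC vdot_mul hA eA vdotZr wv mulr0.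
have NA : vdot (vB *m A) (vB *m A) = c ^+ 2 * lambda1 ^+ 2 + vdot (w *m A) (w *m A).
  rewrite Ab !(vdotDl, vdotDr, vdotZl, vdotZr) vAA cross (vdotC _ _ (w *m A)) cross; ring.
have l2k : lambda2 ^+ 2 <= kappa ^+ 2 * lambda1 ^+ 2.
  have := @sq_le _ _ _ hk.
  by rewrite exprMn real_normK ?num_real.
have cc : 0 <= 1 - c ^+ 2 by rewrite -ww vdot_ge0.
have up : vdot (vB *m A) (vB *m A) <= c ^+ 2 * lambda1 ^+ 2 + kappa ^+ 2 * lambda1 ^+ 2 * (1 - c ^+ 2).
  rewrite NA lerD2l; apply: le_trans key' _; rewrite ww.
  by apply: ler_wpM2r.
set e := vB *m (A - B).
have Be : vB *m A = mu1 *: vB + e by rewrite /e mulmxBr eB addrC subrK.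
set p := vnorm e.
have peta : p <= eta by apply: spec_norm_ub.
have p0 : 0 <= p by apply: sqrtr_ge0.
set s := vdot vB e.
have sp : s ^+ 2 <= p ^+ 2.
  rewrite vnorm_sq; have := @vdot_ge0 _ _ (e - s *: vB).
  rewrite !(vdotBl, vdotBr, vdotZl, vdotZr) vBB (vdotC _ _ e vB) -/s.
  move=> h; rewrite -subr_ge0; apply: le_trans h _; rewrite le_eqVlt; apply/orP; left; apply/eqP; ring.
have NB : vdot (vB *m A) (vB *m A) = mu1 ^+ 2 + 2 * mu1 * s + p ^+ 2.
  rewrite Be vnorm_sq !(vdotDl, vdotDr, vdotZl, vdotZr) vBB (vdotC _ _ e vB) -/s; ring.
have abs_s : `|s| <= p.
  by rewrite -(ler_pXn2r (_ : (0 < 2)%N)) ?nnegrE ?normr_ge0 // real_normK ?num_real.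
have ms : - (`|mu1| * p) <= mu1 * s.
  have : `|mu1 * s| <= `|mu1| * p by rewrite normrM ler_wpM2l.
  move=> h; apply: le_trans (_ : - `|mu1 * s| <= _); first by rewrite lerN2.
  by rewrite lerNl -normrN ler_norm.
have mu2 : mu1 ^+ 2 = `|mu1| ^+ 2 by rewrite real_normK ?num_real.
have kl0 : 0 <= kappa * `|lambda1| by rewrite mulr_ge0.
set m := `|mu1| - eta in hm *.
have low : m ^+ 2 <= vdot (vB *m A) (vB *m A).
  have h1 : 0 <= eta - p by rewrite subr_ge0.
  have h2 : 0 <= 2 * `|mu1| - p - eta by move: hm; rewrite /m; lra.
  have h3 := mulr_ge0 h1 h2.
  rewrite NB mu2 /m; nra.
have L0 : 0 < `|lambda1| by rewrite normr_gt0.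
have lsq : lambda1 ^+ 2 = `|lambda1| ^+ 2 by rewrite real_normK ?num_real.
have K0 : 0 < 1 - kappa ^+ 2 by nra.
have X : (m ^+ 2 - lambda1 ^+ 2 * kappa ^+ 2) / (1 - kappa ^+ 2) <= (c * `|lambda1|) ^+ 2.
  rewrite ler_pdivrMr // exprMn -lsq.
  have := le_trans low up; nra.
have cl0 : 0 <= c * `|lambda1| by rewrite mulr_ge0.
have sq : Num.sqrt ((m ^+ 2 - lambda1 ^+ 2 * kappa ^+ 2) / (1 - kappa ^+ 2)) <= c * `|lambda1|.
  apply: le_trans (_ : Num.sqrt ((c * `|lambda1|) ^+ 2) <= _).
    by rewrite ler_sqrt // sqr_ge0.
  by rewrite sqrtr_sqr ger0_norm.
have fin : `|lambda1|^-1 * Num.sqrt ((m ^+ 2 - lambda1 ^+ 2 * kappa ^+ 2) / (1 - kappa ^+ 2)) <= c.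
  by rewrite ler_pdivrMl // [`|lambda1| * c]mulrC.
rewrite vnorm_sq !(vdotBl, vdotBr) vAA vBB cBA -/c.
move: fin; set Y := _ * Num.sqrt _; lra.
Qed.
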